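(* Let $(\mathcal M,\mathcal H,\mathcal P,\mathcal R)$ be a right pseudo-model category, and let $\mathcal C,\mathcal F,\mathcal W\subseteq\mathcal M$ be the classes of cofibrations, fibrations and weak equivalences of $\mathcal M$. Then the morphisms of $\mathcal P$ lying in $\mathcal C$ and in $\mathcal W$, respectively, are the cofibrations and weak equivalences of a model structure on $\mathcal P$, whose fibrations are the retracts of morphisms $\mathcal R(f)$ with $f\in\mathcal F$.
   Context: A right pseudo-model category $(\mathcal M,\mathcal H,\mathcal P,\mathcal R)$ consists of a model category $\mathcal M$, a full subcategory $\mathcal H\subseteq\mathcal M$ closed under finite limits and under weak equivalences in $\mathcal M$, and a full co-reflective subcategory $\mathcal P\subseteq\mathcal H$ with right adjoint $\mathcal R:\mathcal H\to\mathcal P$ to the inclusion, such that $\mathcal R$ maps cofibrations to cofibrations and weak equivalences to weak equivalences. A ''model structure'' on a category here means the data of cofibrations, fibrations and weak equivalences satisfying the model axioms (lifting, factorization, 2-out-of-3, retracts), without requiring the category to be finitely complete and cocomplete. *)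

(* Defs.v *)
Set Implicit Arguments.
Unset Strict Implicit.

Record Category := {
  Ob :> Type;
  Hom : Ob -> Ob -> Type;
  idm : forall a, Hom a a;
  comp : forall a b c, Hom b c -> Hom a b -> Hom a c;
  comp_assoc : forall a b c d (f : Hom a b) (g : Hom b c) (h : Hom c d),
      comp h (comp g f) = comp (comp h g) f;
  comp_id_l : forall a b (f : Hom a b), comp (idm b) f = f;
  comp_id_r : forall a b (f : Hom a b), comp f (idm a) = f
}.

Arguments Hom {_} _ _.
Arguments idm {_} _.
Arguments comp {_ _ _ _} _ _.

Notation "g \o' f" := (comp g f) (at level 40, left associativity).

Definition MorClass (M : Category) := forall a b : M, Hom a b -> Prop.

Definition LLP {M : Category} {a b x y : M} (i : Hom a b) (p : Hom x y) : Prop :=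
  forall (u : Hom a x) (v : Hom b y), p \o' u = v \o' i ->
    exists h : Hom b x, h \o' i = u /\ p \o' h = v.

Definition IsRetract {M : Category} {a b c d : M} (f : Hom a b) (g : Hom c d) : Prop :=
  exists (s : Hom a c) (r : Hom c a) (s' : Hom b d) (r' : Hom d b),
    r \o' s = idm a /\ r' \o' s' = idm b /\
    g \o' s = s' \o' f /\ f \o' r = r' \o' g.

(* A model structure (no (co)completeness required). *)
Record IsModelStructure (M : Category) (Cof Fib W : MorClass M) : Prop := {
  ms_2of3 : forall (a b c : M) (f : Hom a b) (g : Hom b c),
      (W _ _ f -> W _ _ g -> W _ _ (g \o' f)) /\
      (W _ _ f -> W _ _ (g \o' f) -> W _ _ g) /\
      (W _ _ g -> W _ _ (g \o' f) -> W _ _ f);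
  ms_retract : forall (a b c d : M) (f : Hom a b) (g : Hom c d), IsRetract f g ->
      (Cof _ _ g -> Cof _ _ f) /\ (Fib _ _ g -> Fib _ _ f) /\ (W _ _ g -> W _ _ f);
  ms_lift_triv_fib : forall (a b x y : M) (i : Hom a b) (p : Hom x y),
      Cof _ _ i -> Fib _ _ p -> W _ _ p -> LLP i p;
  ms_lift_triv_cof : forall (a b x y : M) (i : Hom a b) (p : Hom x y),
      Cof _ _ i -> W _ _ i -> Fib _ _ p -> LLP i p;
  ms_fact_triv_cof : forall (a b : M) (f : Hom a b),
      exists (c : M) (i : Hom a c) (p : Hom c b),
        f = p \o' i /\ Cof _ _ i /\ W _ _ i /\ Fib _ _ p;
  ms_fact_triv_fib : forall (a b : M) (f : Hom a b),
      exists (c : M) (i : Hom a c) (p : Hom c b),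
        f = p \o' i /\ Cof _ _ i /\ Fib _ _ p /\ W _ _ p
}.

Definition IsTerminal {M : Category} (t : M) : Prop :=
  forall x : M, exists! u : Hom x t, True.
Definition IsInitial {M : Category} (t : M) : Prop :=
  forall x : M, exists! u : Hom t x, True.

Definition IsPullback {M : Category} {x y z q : M}
  (f : Hom x z) (g : Hom y z) (p1 : Hom q x) (p2 : Hom q y) : Prop :=
  f \o' p1 = g \o' p2 /\
  forall (w : M) (q1 : Hom w x) (q2 : Hom w y), f \o' q1 = g \o' q2 ->
    exists! u : Hom w q, p1 \o' u = q1 /\ p2 \o' u = q2.

Definition IsPushout {M : Category} {x y z q : M}
  (f : Hom z x) (g : Hom z y) (i1 : Hom x q) (i2 : Hom y q) : Prop :=
  i1 \o' f = i2 \o' g /\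
  forall (w : M) (q1 : Hom x w) (q2 : Hom y w), q1 \o' f = q2 \o' g ->
    exists! u : Hom q w, u \o' i1 = q1 /\ u \o' i2 = q2.

Definition FinitelyComplete (M : Category) : Prop :=
  (exists t : M, IsTerminal t) /\
  forall (x y z : M) (f : Hom x z) (g : Hom y z),
    exists (q : M) (p1 : Hom q x) (p2 : Hom q y), IsPullback f g p1 p2.

Definition FinitelyCocomplete (M : Category) : Prop :=
  (exists t : M, IsInitial t) /\
  forall (x y z : M) (f : Hom z x) (g : Hom z y),
    exists (q : M) (i1 : Hom x q) (i2 : Hom y q), IsPushout f g i1 i2.

Definition IsModelCategory (M : Category) (Cof Fib W : MorClass M) : Prop :=
  IsModelStructure Cof Fib W /\ FinitelyComplete M /\ FinitelyCocomplete M.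

Section FullSub.
Variables (M : Category) (S : M -> Prop).
Definition FullSub : Category :=
  {| Ob := { x : M | S x };
     Hom := fun a b => @Hom M (proj1_sig a) (proj1_sig b);
     idm := fun a => idm (proj1_sig a);
     comp := fun a b c g f => g \o' f;
     comp_assoc := fun a b c d f g h => comp_assoc f g h;
     comp_id_l := fun a b f => comp_id_l f;
     comp_id_r := fun a b f => comp_id_r f |}.
End FullSub.

(* H and P are full subcategories
   given by predicates on objects.  The right adjoint R : H -> P of the
   inclusion P -> H is encoded by its object map RO, its morphism map RH and
   its counit eps (meaningful on objects of H): RO x lies in P, eps is natural,
   and eps_x : RO x -> x is couniversal among maps from objects of P. *)
Definition IsRightPseudoModelCategory (M : Category) (Cof Fib W : MorClass M)
  (H P : M -> Prop) (RO : M -> M)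
  (RH : forall x y : M, Hom x y -> Hom (RO x) (RO y))
  (eps : forall x : M, Hom (RO x) x) : Prop :=
  IsModelCategory Cof Fib W /\
  (forall t : M, IsTerminal t -> H t) /\
  (forall (x y z q : M) (f : Hom x z) (g : Hom y z) (p1 : Hom q x) (p2 : Hom q y),
      H x -> H y -> H z -> IsPullback f g p1 p2 -> H q) /\
  (forall (a b : M) (f : Hom a b), W _ _ f -> (H a <-> H b)) /\
  (forall x : M, P x -> H x) /\
  (forall x : M, H x -> P (RO x)) /\
  (forall (x y : M) (f : Hom x y), H x -> H y -> eps y \o' RH _ _ f = f \o' eps x) /\
  (forall (x y : M) (g : Hom y x), H x -> P y ->
      exists! h : Hom y (RO x), eps x \o' h = g) /\
  (forall (x y : M) (f : Hom x y), H x -> H y -> Cof _ _ f -> Cof _ _ (RH _ _ f)) /\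
  (forall (x y : M) (f : Hom x y), H x -> H y -> W _ _ f -> W _ _ (RH _ _ f)).

(* Main.v *)
Require Import Defs.

Lemma llp_retract {M : Category} {a b x y c d : M} (i : Hom a b) (f : Hom x y) (g : Hom c d) :
  LLP i g -> IsRetract f g -> LLP i f.
Proof.
  intros Hl [s [r [s' [r' [E1 [E2 [E3 E4]]]]]]] u v Hsq.
  destruct (Hl (s \o' u) (s' \o' v)) as [h [Hh1 Hh2]].
  { rewrite comp_assoc, E3, <- comp_assoc, Hsq, comp_assoc. reflexivity. }
  exists (r \o' h). split.
  - rewrite <- comp_assoc, Hh1, comp_assoc, E1, comp_id_l. reflexivity.
  - rewrite comp_assoc, E4, <- comp_assoc, Hh2, comp_assoc, E2, comp_id_l. reflexivity.
Qed.

Lemma retract_trans {M : Category} {a b c d e e' : M} (f : Hom a b) (g : Hom c d) (k : Hom e e') :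
  IsRetract f g -> IsRetract g k -> IsRetract f k.
Proof.
  intros [s1 [r1 [s1' [r1' [A1 [A2 [A3 A4]]]]]]] [s2 [r2 [s2' [r2' [B1 [B2 [B3 B4]]]]]]].
  exists (s2 \o' s1), (r1 \o' r2), (s2' \o' s1'), (r1' \o' r2'). repeat split.
  - rewrite <- comp_assoc, (comp_assoc s1 s2 r2), B1, comp_id_l. exact A1.
  - rewrite <- comp_assoc, (comp_assoc s1' s2' r2'), B2, comp_id_l. exact A2.
  - rewrite comp_assoc, B3, <- comp_assoc, A3, comp_assoc. reflexivity.
  - rewrite comp_assoc, A4, <- comp_assoc, B4, comp_assoc. reflexivity.
Qed.

Lemma retract_of_factor {M : Category} {x y c : M} (p : Hom x y) (j : Hom x c) (q : Hom c y) :
  LLP j p -> p = q \o' j -> IsRetract p q.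
Proof.
  intros Hl E.
  destruct (Hl (idm x) q) as [h [H1 H2]].
  { rewrite comp_id_r. exact E. }
  exists j, h, (idm y), (idm y). repeat split.
  - exact H1.
  - apply comp_id_l.
  - rewrite comp_id_l. symmetry. exact E.
  - rewrite comp_id_l. exact H2.
Qed.

Section Aux.
Variables (M : Category) (Cof Fib W : MorClass M)
  (H P : M -> Prop) (RO : M -> M)
  (RH : forall x y : M, Hom x y -> Hom (RO x) (RO y))
  (eps : forall x : M, Hom (RO x) x).
Hypothesis HR : IsRightPseudoModelCategory Cof Fib W H P RH eps.

Lemma iso_eps (x : M) : P x -> exists h : Hom x (RO x),
  eps x \o' h = idm x /\ h \o' eps x = idm (RO x).
Proof.
  destruct HR as [_ [_ [_ [_ [PH [PRO [nat [univ _]]]]]]]].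
  intros Px.
  destruct (univ x x (idm x) (PH x Px) Px) as [h [Hh _]].
  exists h. split; [exact Hh|].
  destruct (univ x (RO x) (eps x) (PH x Px) (PRO x (PH x Px))) as [h0 [_ U]].
  transitivity h0; [symmetry|]; apply U.
  - rewrite comp_assoc, Hh. apply comp_id_l.
  - apply comp_id_r.
Qed.

Lemma transpose_llp (a b x y : M) (i : Hom a b) (g : Hom x y) :
  P a -> P b -> H x -> H y -> LLP i g -> LLP i (RH x y g).
Proof.
  destruct HR as [_ [_ [_ [_ [PH [PRO [nat [univ _]]]]]]]].
  intros Pa Pb Hx Hy Hl u v Hsq.
  destruct (Hl (eps x \o' u) (eps y \o' v)) as [h' [H1 H2]].
  { rewrite comp_assoc, <- nat by assumption. rewrite <- comp_assoc, Hsq, comp_assoc. reflexivity. }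
  destruct (univ x b h' Hx Pb) as [h [Hh _]].
  exists h. split.
  - destruct (univ x a (eps x \o' u) Hx Pa) as [h0 [_ U]].
    transitivity h0; [symmetry|]; apply U; [|reflexivity].
    rewrite comp_assoc, Hh. exact H1.
  - destruct (univ y b (eps y \o' v) Hy Pb) as [h0 [_ U]].
    transitivity h0; [symmetry|]; apply U; [|reflexivity].
    rewrite comp_assoc, nat by assumption. rewrite <- comp_assoc, Hh. exact H2.
Qed.

Lemma factor_P (a b c : M) (f : Hom a b) (i : Hom a c) (p : Hom c b) :
  P a -> P b -> H c -> f = p \o' i ->
  exists (i' : Hom a (RO c)) (q : Hom (RO c) b),
    f = q \o' i' /\ IsRetract i' (RH a c i) /\ IsRetract q (RH c b p).
Proof.
  pose proof (iso_eps) as ISO.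
  destruct HR as [_ [_ [_ [_ [PH [PRO [nat [univ _]]]]]]]].
  intros Pa Pb Hc E.
  destruct (ISO a Pa) as [ha [Ha1 Ha2]].
  destruct (ISO b Pb) as [hb [Hb1 Hb2]].
  exists (RH a c i \o' ha), (eps b \o' RH c b p). repeat split.
  - rewrite <- comp_assoc, comp_assoc, nat by auto.
    rewrite <- comp_assoc, (comp_assoc ha), nat by auto.
    rewrite <- comp_assoc, Ha1, comp_id_r. exact E.
  - exists ha, (eps a), (idm _), (idm _). repeat split.
    + exact Ha1.
    + apply comp_id_l.
    + rewrite comp_id_l. reflexivity.
    + rewrite <- comp_assoc, Ha2, comp_id_r, comp_id_l. reflexivity.
  - exists (idm _), (idm _), hb, (eps b). repeat split.
    + apply comp_id_l.
    + exact Hb1.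
    + rewrite comp_assoc, Hb2, comp_id_l, comp_id_r. reflexivity.
    + apply comp_id_r.
Qed.

End Aux.

Theorem mainTheorem2 (M : Category) (Cof Fib W : MorClass M)
  (H P : M -> Prop) (RO : M -> M)
  (RH : forall x y : M, Hom x y -> Hom (RO x) (RO y))
  (eps : forall x : M, Hom (RO x) x) :
  IsRightPseudoModelCategory Cof Fib W H P RH eps ->
  @IsModelStructure (FullSub P)
    (fun a b f => Cof (proj1_sig a) (proj1_sig b) f)
    (fun a b f => exists (x y : M) (g : Hom x y),
        H x /\ H y /\ Fib _ _ g /\ IsRetract (M := M) f (RH _ _ g))
    (fun a b f => W (proj1_sig a) (proj1_sig b) f).
Proof.
  intros HR.
  pose proof (@transpose_llp M Cof Fib W H P RO RH eps HR) as TR.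
  pose proof (@factor_P M Cof Fib W H P RO RH eps HR) as FA.
  destruct HR as [[MS _] [_ [_ [HW [PH [PRO [nat [univ [RCof RW]]]]]]]]].
  assert (CASE3 : forall (a b x y x0 y0 : M) (i : Hom a b) (p : Hom x y) (g0 : Hom x0 y0),
            P a -> P b -> Cof _ _ i -> W _ _ i -> H x0 -> H y0 -> Fib _ _ g0 ->
            IsRetract p (RH _ _ g0) -> LLP i p).
  { intros a b x y x0 y0 i p g0 Pa Pb Ci Wi Hx0 Hy0 Fg Hr.
    eapply llp_retract; [|exact Hr].
    apply TR; auto. intros u v Hs. eapply (ms_lift_triv_cof MS); eauto. }
  constructor.
  - intros [a Pa] [b Pb] [c Pc] f g. apply (ms_2of3 MS).
  - intros [a Pa] [b Pb] [c Pc] [d Pd] f g Hr. split; [|split].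
    + apply (ms_retract MS Hr).
    + intros [x [y [g0 [Hx [Hy [Hg Hr2]]]]]]. exists x, y, g0. repeat split; auto.
      exact (@retract_trans M _ _ _ _ _ _ f g _ Hr Hr2).
    + apply (ms_retract MS Hr).
  - intros [a Pa] [b Pb] [x Px] [y Py] i p Ci [x0 [y0 [g0 [Hx0 [Hy0 [Hg Hr]]]]]] Wp.
    simpl in *. change (@LLP M a b x y i p).
    destruct (ms_fact_triv_fib MS p) as [c [j0 [g' [E [Cj0 [Fg' Wg']]]]]].
    assert (Hc : H c) by (apply (HW _ _ g' Wg'); apply PH; exact Py).
    destruct (FA x y c p j0 g' Px Py Hc E) as [j' [q [E' [Rj Rq]]]].
    assert (Wq : W _ _ q) by (apply (ms_retract MS Rq); apply RW; auto using PH).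
    assert (Cj' : Cof _ _ j') by (apply (ms_retract MS Rj); apply RCof; auto using PH).
    assert (Wj' : W _ _ j').
    { apply (proj2 (proj2 (ms_2of3 MS j' q))); [exact Wq|]. rewrite <- E'. exact Wp. }
    assert (Lj : LLP j' p) by (apply (CASE3 _ _ _ _ x0 y0 _ _ g0); auto).
    pose proof (retract_of_factor p j' q Lj E') as Rp.
    eapply llp_retract; [|exact Rp].
    eapply llp_retract; [|exact Rq].
    apply TR; auto using PH. intros u v Hs. eapply (ms_lift_triv_fib MS); eauto.
  - intros [a Pa] [b Pb] [x Px] [y Py] i p Ci Wi [x0 [y0 [g0 [Hx0 [Hy0 [Hg Hr]]]]]].
    simpl in *. change (@LLP M a b x y i p). apply (CASE3 _ _ _ _ x0 y0 _ _ g0); auto.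
  - intros [a Pa] [b Pb] f. simpl in *.
    destruct (ms_fact_triv_cof MS f) as [c [i [p [E [Ci [Wi Fp]]]]]].
    assert (Hc : H c) by (apply (HW _ _ i Wi); apply PH; exact Pa).
    destruct (FA a b c f i p Pa Pb Hc E) as [i' [q [E' [Ri Rq]]]].
    exists (exist _ (RO c) (PRO c Hc)), i', q. simpl. repeat split.
    + exact E'.
    + apply (ms_retract MS Ri); apply RCof; auto using PH.
    + apply (ms_retract MS Ri); apply RW; auto using PH.
    + exists c, b, p. repeat split; auto using PH.
  - intros [a Pa] [b Pb] f. simpl in *.
    destruct (ms_fact_triv_fib MS f) as [c [i [p [E [Ci [Fp Wp]]]]]].
    assert (Hc : H c) by (apply (HW _ _ p Wp); apply PH; exact Pb).
    destruct (FA a b c f i p Pa Pb Hc E) as [i' [q [E' [Ri Rq]]]].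
    exists (exist _ (RO c) (PRO c Hc)), i', q. simpl. repeat split.
    + exact E'.
    + apply (ms_retract MS Ri); apply RCof; auto using PH.
    + exists c, b, p. repeat split; auto using PH.
    + apply (ms_retract MS Rq); apply RW; auto using PH.
Qed.
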